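(* Let $\Delta$ be a saturated sample set. For every basic term $t$, every valuation $\theta$, and every $\Delta$-diagram $\delta$: if $\theta(x)$ strongly extends $\delta_x$ for every term variable $x$, then $[\![t]\!]_\theta$ strongly extends $\delta_t$.
   Context: Time warps: $\overline{\omega}=\omega\cup\{\omega\}$ with its natural order; a time warp is a monotone $f\colon\overline\omega\to\overline\omega$ with $f(0)=0$, $f(\omega)=\bigvee_{n\in\omega}f(n)$; $W$ is the set of time warps ordered pointwise, $fg:=f\circ g$, $\mathrm{id}$ identity, $\bot$ constant $0$, $\top$ maps $p\neq0$ to $\omega$. Residuals $\backslash,/$ on $W$ satisfy $f\le h/g\iff fg\le h\iff g\le f\backslash h$; $f^{\ell}:=\mathrm{id}/f$, $f^{r}:=f\backslash\mathrm{id}$, $f^{o}:=\top\backslash f$; $\mathrm{last}(f):=\bigwedge\{p\in\overline\omega\mid f(p)=f(\omega)\}$. Basic terms: $t,u::=x\mid tu\mid t^{o}\mid t^{\ell}\mid t^{r}\mid\mathrm{id}\mid\bot$ ($x$ a term variable). A valuation $\theta$ maps term variables to $W$; $[\![x]\!]_\theta=\theta(x)$, $[\![tu]\!]_\theta=[\![t]\!]_\theta[\![u]\!]_\theta$, $[\![t^{\star}]\!]_\theta=([\![t]\!]_\theta)^{\star}$ for $\star\in\{o,\ell,r\}$, $[\![\mathrm{id}]\!]_\theta=\mathrm{id}$, $[\![\bot]\!]_\theta=\bot$. Samples: $\alpha::=\kappa\mid t[\alpha]\mid\mathsf{s}(\alpha)\mid\mathsf{p}(\alpha)\mid\mathsf{last}(t)$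 ($\kappa$ a time variable, $t$ a basic term). Relation $\leadsto$: $t[\alpha]\leadsto\alpha$; $\mathsf{s}(\alpha)\leadsto\alpha$; $\mathsf{p}(\alpha)\leadsto\alpha$; $(tu)[\alpha]\leadsto t[u[\alpha]]$; $t^{o}[\alpha]\leadsto t[\alpha]$; $t^{r}[\alpha]\leadsto t[t^{r}[\alpha]], t[\mathsf{s}(t^{r}[\alpha])]$; $t^{\ell}[\alpha]\leadsto t[t^{\ell}[\alpha]], t[\mathsf{p}(t^{\ell}[\alpha])]$; $t[\alpha]\leadsto t[\mathsf{last}(t)]$. A sample set is saturated if closed under $\leadsto$. For $p\in\overline\omega$: $p\ominus1=p-1$ if $p\in\omega\setminus\{0\}$, else $p$; $p\oplus1=p+1$ if $p\in\omega$, else $p$. For a saturated sample set $\Delta$, a $\Delta$-diagram is a map $\delta\colon\Delta\to\overline\omega$ such that (all samples mentioned belonging to $\Delta$): (S1) $\delta(\alpha)\le\delta(\beta)\Rightarrow\delta(t[\alpha])\le\delta(t[\beta])$; (S2) $\delta(\alpha)=0\Rightarrow\delta(t[\alpha])=0$; (S3) $\delta(\mathsf{p}(\alpha))=\delta(\alpha)\ominus1$; (S4) $\delta(\mathsf{s}(\alpha))=\delta(\alpha)\oplus1$; (S5) for $t[\alpha]\in\Delta$: $\delta(\mathsf{last}(t))\le\delta(\alpha)\iff\delta(t[\alpha])=\delta(t[\mathsf{last}(t)])$; (S6) $\delta(\mathsf{last}(t))=\omega\Rightarrow\delta(t[\mathsf{last}(t)])=\omega$; (L1) $\delta(\mathrm{id}[\alpha])=\delta(\alpha)$;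 (L2) if $\bot[\alpha]\in\Delta$ then $\delta(\mathsf{last}(\bot))=0$; (L3) $\delta((tu)[\alpha])=\delta(t[u[\alpha]])$; (L4) if $(tu)[\mathsf{last}(tu)]\in\Delta$ and $\delta(\mathsf{last}(tu))=\omega$ then $\delta(\mathsf{last}(t))=\delta(\mathsf{last}(u))=\omega$; (O1) $\delta(t^{o}[\alpha])\in\{0,\omega\}$; (O2) $\delta(\alpha)<\omega\Rightarrow(\delta(t^{o}[\alpha])=\omega\iff\delta(t[\alpha])=\omega)$; (O3) $\delta(\mathsf{last}(t^{o}))<\omega$; (O4) for $t[\alpha],t^{o}[\mathsf{last}(t^{o})]\in\Delta$: if $\delta(t^{o}[\mathsf{last}(t^{o})])<\omega$ and $\delta(\alpha)<\omega$ then $\delta(t[\alpha])<\omega$; (R1) $\delta(t[t^{r}[\alpha]])\le\delta(\alpha)$; (R2) for $t^{r}[\alpha]\in\Delta$: if $0<\delta(\alpha)<\omega$ and $\delta(t^{r}[\alpha])<\omega$ then $\delta(\alpha)<\delta(t[\mathsf{s}(t^{r}[\alpha])])$; (R3) for $t^{r}[\mathsf{last}(t^{r})]\in\Delta$: $\delta(\mathsf{last}(t^{r}))=\omega\Rightarrow\delta(\mathsf{last}(t))=\omega$; (R4) for $t^{r}[\mathsf{last}(t^{r})]\in\Delta$: $\delta(t^{r}[\mathsf{last}(t^{r})])<\omega\Rightarrow\delta(t[\mathsf{s}(t^{r}[\mathsf{last}(t^{r})])])=\omega$; (Λ1) for $t[t^{\ell}[\alpha]]\in\Delta$: $\delta(t^{\ell}[\alpha])<\omega\Rightarrow\delta(\alpha)\le\delta(t[t^{\ell}[\alpha]])$;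 (Λ2) for $t^{\ell}[\alpha]\in\Delta$: if $0<\delta(\alpha)<\omega$ and $\delta(t^{\ell}[\alpha])<\omega$ then $\delta(t[\mathsf{p}(t^{\ell}[\alpha])])<\delta(\alpha)$; (Λ3) for $t[t^{\ell}[\alpha]]\in\Delta$: if $\delta(\alpha)<\omega$ and $\delta(t^{\ell}[\alpha])=\omega$ then $\delta(t[t^{\ell}[\alpha]])<\delta(\alpha)$; (Λ4) for $t^{\ell}[\mathsf{last}(t^{\ell})]\in\Delta$: $\delta(\mathsf{last}(t^{\ell}))=\omega\Rightarrow\delta(\mathsf{last}(t))=\omega$; (Λ5) for $t^{\ell}[\mathsf{last}(t^{\ell})]\in\Delta$: $\delta(t^{\ell}[\mathsf{last}(t^{\ell})])<\omega\Rightarrow\delta(t[t^{\ell}[\mathsf{last}(t^{\ell})]])=\omega$. For a $\Delta$-diagram $\delta$ and basic term $t$, let $\delta_t:=\{(\delta(\alpha),\delta(t[\alpha]))\mid t[\alpha]\in\Delta\}$. A time warp $f$ extends $\delta_t$ if $f(i)=j$ for all $(i,j)\in\delta_t$, and strongly extends $\delta_t$ if moreover either $\delta_t=\emptyset$, or ($\delta_t\ne\emptyset$ and $\delta(\mathsf{last}(t))=\omega$ implies $\mathrm{last}(f)=\omega$). *)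

(* Defs.v *)
From Stdlib Require Import Arith ClassicalEpsilon.

Inductive wb : Type := Fin (n : nat) | Om.

Definition wle (p q : wb) : Prop :=
  match p, q with
  | Fin m, Fin n => m <= n
  | _, Om => True
  | Om, Fin _ => False
  end.

Definition wlt (p q : wb) : Prop := wle p q /\ p <> q.

Definition is_lub (S : wb -> Prop) (p : wb) : Prop :=
  (forall q, S q -> wle q p) /\ (forall r, (forall q, S q -> wle q r) -> wle p r).

Definition is_glb (S : wb -> Prop) (p : wb) : Prop :=
  (forall q, S q -> wle p q) /\ (forall r, (forall q, S q -> wle r q) -> wle r p).

Definition wpred (p : wb) : wb :=
  match p with Fin (S n) => Fin n | _ => p end.
Definition wsucc (p : wb) : wb :=
  match p with Fin n => Fin (S n) | Om => Om end.

Definition is_warp (f : wb -> wb) : Prop :=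
  (forall p q, wle p q -> wle (f p) (f q)) /\
  f (Fin 0) = Fin 0 /\
  is_lub (fun y => exists n, y = f (Fin n)) (f Om).

Definition fle (f g : wb -> wb) : Prop := forall p, wle (f p) (g p).

Definition wcomp (f g : wb -> wb) : wb -> wb := fun p => f (g p).
Definition wid : wb -> wb := fun p => p.
Definition wbot : wb -> wb := fun _ => Fin 0.
Definition wtop : wb -> wb := fun p => match p with Fin 0 => Fin 0 | _ => Om end.

(* Residuals on W, defined by their universal property:
   f <= h / g  <->  f g <= h  <->  g <= f \ h   (f, g ranging over W). *)
Definition rdiv (h g : wb -> wb) : wb -> wb :=
  epsilon (inhabits wid)
    (fun r => is_warp r /\ forall f, is_warp f -> (fle f r <-> fle (wcomp f g) h)).
Definition ldiv (f h : wb -> wb) : wb -> wb :=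
  epsilon (inhabits wid)
    (fun r => is_warp r /\ forall g, is_warp g -> (fle g r <-> fle (wcomp f g) h)).

Definition wl (f : wb -> wb) : wb -> wb := rdiv wid f.
Definition wr (f : wb -> wb) : wb -> wb := ldiv f wid.
Definition wo (f : wb -> wb) : wb -> wb := ldiv wtop f.

Definition wlast (f : wb -> wb) : wb :=
  epsilon (inhabits Om) (is_glb (fun p => f p = f Om)).

Inductive term : Type :=
| TVar (x : nat)
| TComp (t u : term)
| TO (t : term)
| TL (t : term)
| TR (t : term)
| TId
| TBot.

Fixpoint denote (theta : nat -> wb -> wb) (t : term) : wb -> wb :=
  match t with
  | TVar x => theta x
  | TComp t u => wcomp (denote theta t) (denote theta u)
  | TO t => wo (denote theta t)
  | TL t => wl (denote theta t)
  | TR t => wr (denote theta t)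
  | TId => wid
  | TBot => wbot
  end.

Inductive sample : Type :=
| SVar (k : nat)
| SApp (t : term) (a : sample)
| SS (a : sample)
| SP (a : sample)
| SLast (t : term).

Inductive leadsto : sample -> sample -> Prop :=
| lt_app t a : leadsto (SApp t a) a
| lt_s a : leadsto (SS a) a
| lt_p a : leadsto (SP a) a
| lt_comp t u a : leadsto (SApp (TComp t u) a) (SApp t (SApp u a))
| lt_o t a : leadsto (SApp (TO t) a) (SApp t a)
| lt_r1 t a : leadsto (SApp (TR t) a) (SApp t (SApp (TR t) a))
| lt_r2 t a : leadsto (SApp (TR t) a) (SApp t (SS (SApp (TR t) a)))
| lt_l1 t a : leadsto (SApp (TL t) a) (SApp t (SApp (TL t) a))
| lt_l2 t a : leadsto (SApp (TL t) a) (SApp t (SP (SApp (TL t) a)))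
| lt_last t a : leadsto (SApp t a) (SApp t (SLast t)).

Definition saturated (D : sample -> Prop) : Prop :=
  forall a b, D a -> leadsto a b -> D b.

Definition is_diagram (D : sample -> Prop) (d : sample -> wb) : Prop :=
  (forall t a b, D a -> D b -> D (SApp t a) -> D (SApp t b) ->
     wle (d a) (d b) -> wle (d (SApp t a)) (d (SApp t b))) /\
  (forall t a, D a -> D (SApp t a) -> d a = Fin 0 -> d (SApp t a) = Fin 0) /\
  (forall a, D a -> D (SP a) -> d (SP a) = wpred (d a)) /\
  (forall a, D a -> D (SS a) -> d (SS a) = wsucc (d a)) /\
  (forall t a, D a -> D (SApp t a) -> D (SLast t) -> D (SApp t (SLast t)) ->
     (wle (d (SLast t)) (d a) <-> d (SApp t a) = d (SApp t (SLast t)))) /\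
  (forall t, D (SLast t) -> D (SApp t (SLast t)) ->
     d (SLast t) = Om -> d (SApp t (SLast t)) = Om) /\
  (forall a, D a -> D (SApp TId a) -> d (SApp TId a) = d a) /\
  (forall a, D (SApp TBot a) -> D (SLast TBot) -> d (SLast TBot) = Fin 0) /\
  (forall t u a, D (SApp (TComp t u) a) -> D (SApp t (SApp u a)) ->
     d (SApp (TComp t u) a) = d (SApp t (SApp u a))) /\
  (forall t u, D (SApp (TComp t u) (SLast (TComp t u))) -> D (SLast (TComp t u)) ->
     D (SLast t) -> D (SLast u) ->
     d (SLast (TComp t u)) = Om -> d (SLast t) = Om /\ d (SLast u) = Om) /\
  (forall t a, D (SApp (TO t) a) ->
     d (SApp (TO t) a) = Fin 0 \/ d (SApp (TO t) a) = Om) /\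
  (forall t a, D a -> D (SApp (TO t) a) -> D (SApp t a) ->
     wlt (d a) Om -> (d (SApp (TO t) a) = Om <-> d (SApp t a) = Om)) /\
  (forall t, D (SLast (TO t)) -> wlt (d (SLast (TO t))) Om) /\
  (forall t a, D a -> D (SApp t a) -> D (SApp (TO t) (SLast (TO t))) ->
     wlt (d (SApp (TO t) (SLast (TO t)))) Om -> wlt (d a) Om ->
     wlt (d (SApp t a)) Om) /\
  (forall t a, D a -> D (SApp (TR t) a) -> D (SApp t (SApp (TR t) a)) ->
     wle (d (SApp t (SApp (TR t) a))) (d a)) /\
  (forall t a, D a -> D (SApp (TR t) a) -> D (SApp t (SS (SApp (TR t) a))) ->
     wlt (Fin 0) (d a) -> wlt (d a) Om -> wlt (d (SApp (TR t) a)) Om ->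
     wlt (d a) (d (SApp t (SS (SApp (TR t) a))))) /\
  (forall t, D (SApp (TR t) (SLast (TR t))) -> D (SLast (TR t)) -> D (SLast t) ->
     d (SLast (TR t)) = Om -> d (SLast t) = Om) /\
  (forall t, D (SApp (TR t) (SLast (TR t))) ->
     D (SApp t (SS (SApp (TR t) (SLast (TR t))))) ->
     wlt (d (SApp (TR t) (SLast (TR t)))) Om ->
     d (SApp t (SS (SApp (TR t) (SLast (TR t))))) = Om) /\
  (forall t a, D a -> D (SApp (TL t) a) -> D (SApp t (SApp (TL t) a)) ->
     wlt (d (SApp (TL t) a)) Om -> wle (d a) (d (SApp t (SApp (TL t) a)))) /\
  (forall t a, D a -> D (SApp (TL t) a) -> D (SApp t (SP (SApp (TL t) a))) ->
     wlt (Fin 0) (d a) -> wlt (d a) Om -> wlt (d (SApp (TL t) a)) Om ->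
     wlt (d (SApp t (SP (SApp (TL t) a)))) (d a)) /\
  (forall t a, D a -> D (SApp (TL t) a) -> D (SApp t (SApp (TL t) a)) ->
     wlt (d a) Om -> d (SApp (TL t) a) = Om ->
     wlt (d (SApp t (SApp (TL t) a))) (d a)) /\
  (forall t, D (SApp (TL t) (SLast (TL t))) -> D (SLast (TL t)) -> D (SLast t) ->
     d (SLast (TL t)) = Om -> d (SLast t) = Om) /\
  (forall t, D (SApp (TL t) (SLast (TL t))) ->
     D (SApp t (SApp (TL t) (SLast (TL t)))) ->
     wlt (d (SApp (TL t) (SLast (TL t)))) Om ->
     d (SApp t (SApp (TL t) (SLast (TL t)))) = Om).

Definition delta_t (D : sample -> Prop) (d : sample -> wb) (t : term) (i j : wb) : Prop :=
  exists a, D (SApp t a) /\ i = d a /\ j = d (SApp t a).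

Definition extends (D : sample -> Prop) (d : sample -> wb) (t : term) (f : wb -> wb) : Prop :=
  forall i j, delta_t D d t i j -> f i = j.

Definition strongly_extends (D : sample -> Prop) (d : sample -> wb) (t : term)
  (f : wb -> wb) : Prop :=
  extends D d t f /\
  ((forall i j, ~ delta_t D d t i j) \/
   ((exists i j, delta_t D d t i j) /\ (d (SLast t) = Om -> wlast f = Om))).

(* Main.v *)
Require Import Defs.
From Stdlib Require Import Arith Lia Classical ClassicalEpsilon.

Lemma wle_refl p : wle p p. Proof. destruct p; simpl; auto. Qed.
Lemma wle_trans p q r : wle p q -> wle q r -> wle p r.
Proof. destruct p, q, r; simpl; intros; auto; try lia; contradiction. Qed.
Lemma wle_total p q : wle p q \/ wle q p.
Proof. destruct p, q; simpl; auto; lia. Qed.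
Lemma wle_antisym p q : wle p q -> wle q p -> p = q.
Proof. destruct p, q; simpl; intros; auto; try contradiction. f_equal; lia. Qed.
Lemma wle_Om p : wle p Om. Proof. destruct p; simpl; auto. Qed.
Lemma wle_0 p : wle (Fin 0) p. Proof. destruct p; simpl; auto; lia. Qed.
Lemma wle_Om_inv p : wle Om p -> p = Om. Proof. destruct p; simpl; auto; contradiction. Qed.
Lemma wlt_Om p : wlt p Om -> exists n, p = Fin n.
Proof. destruct p; unfold wlt; intros [_ H]; eauto; contradiction. Qed.
Lemma Fin_wlt_Om n : wlt (Fin n) Om. Proof. split; simpl; auto; discriminate. Qed.
Lemma not_wle p q : ~ wle p q -> wle q p.
Proof. intros H; destruct (wle_total p q); tauto. Qed.
Lemma wlt_not_wle p q : wlt p q -> ~ wle q p.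
Proof. intros [H1 H2] H3. apply H2, wle_antisym; auto. Qed.
Lemma not_wle_Fin x m : ~ wle x (Fin m) -> wle (Fin (S m)) x.
Proof. destruct x; simpl; auto; lia. Qed.

Lemma lub_exists A : exists p, is_lub A p.
Proof.
  destruct (classic (exists m, forall q, A q -> wle q (Fin m))) as [[m Hm]|Hn].
  - revert Hm. induction m; intros Hm.
    + exists (Fin 0). split; auto. intros r _. apply wle_0.
    + destruct (classic (forall q, A q -> wle q (Fin m))) as [H|H]; [now apply IHm|].
      apply not_all_ex_not in H. destruct H as [q Hq].
      apply imply_to_and in Hq. destruct Hq as [Sq Hq].
      assert (q = Fin (S m)).
      { specialize (Hm q Sq). destruct q; simpl in *; try contradiction. f_equal. lia. }
      subst. exists (Fin (S m)). split; auto.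
  - exists Om. split. intros; apply wle_Om.
    intros r Hr. destruct r; [|apply wle_refl]. exfalso; apply Hn; eauto.
Qed.

Lemma glb_exists A : exists p, is_glb A p.
Proof.
  destruct (classic (exists n, A (Fin n))) as [[n Hn]|Hn].
  - assert (H: forall n, (exists k, k <= n /\ A (Fin k)) -> exists p, is_glb A p).
    { induction n0 as [|n0 IH]; intros [k [Hk Sk]].
      + assert (k = 0) by lia; subst. exists (Fin 0). split. intros; apply wle_0.
        intros r Hr. apply Hr; auto.
      + destruct (classic (exists k, k <= n0 /\ A (Fin k))) as [H|H]; [now apply IH|].
        assert (k = S n0).
        { destruct (Nat.eq_dec k (S n0)); auto. exfalso; apply H; exists k; split; auto; lia. }
        subst. exists (Fin (S n0)). split.
        * intros q Sq. destruct q as [j|]; simpl; auto.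
          destruct (le_lt_dec (S n0) j); auto. exfalso; apply H; exists j; split; auto; lia.
        * intros r Hr; apply Hr; auto. }
    apply (H n); exists n; auto.
  - exists Om. split.
    + intros q Sq. destruct q; [exfalso; eauto|apply wle_refl].
    + intros r _; apply wle_Om.
Qed.

Definition wsup (A : wb -> Prop) : wb := epsilon (inhabits Om) (is_lub A).
Definition winf (A : wb -> Prop) : wb := epsilon (inhabits Om) (is_glb A).
Lemma wsup_spec A : is_lub A (wsup A).
Proof. exact (epsilon_spec _ _ (lub_exists A)). Qed.
Lemma winf_spec A : is_glb A (winf A).
Proof. exact (epsilon_spec _ _ (glb_exists A)). Qed.
Lemma lub_unique A p q : is_lub A p -> is_lub A q -> p = q.
Proof. intros [H1 H2] [H3 H4]. apply wle_antisym; [apply H2, H3 | apply H4, H1]. Qed.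
Lemma glb_unique A p q : is_glb A p -> is_glb A q -> p = q.
Proof. intros [H1 H2] [H3 H4]. apply wle_antisym; [apply H4, H1 | apply H2, H3]. Qed.
Lemma wsup_ub A q : A q -> wle q (wsup A).
Proof. intros; apply (proj1 (wsup_spec A)); auto. Qed.
Lemma wsup_least A r : (forall q, A q -> wle q r) -> wle (wsup A) r.
Proof. intros; apply (proj2 (wsup_spec A)); auto. Qed.
Lemma winf_lb A q : A q -> wle (winf A) q.
Proof. intros; apply (proj1 (winf_spec A)); auto. Qed.
Lemma winf_greatest A r : (forall q, A q -> wle r q) -> wle r (winf A).
Proof. intros; apply (proj2 (winf_spec A)); auto. Qed.
Lemma lub_approx A p q : is_lub A p -> wlt q p -> exists x, A x /\ ~ wle x q.
Proof.
  intros [H1 H2] Hq. apply NNPP; intro H. apply (wlt_not_wle _ _ Hq). apply H2.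
  intros x Sx. apply NNPP. intro. apply H. eauto.
Qed.
Lemma top_of_all s : (forall m, wle (Fin m) s) -> s = Om.
Proof. intros H. destruct s as [m|]; auto. specialize (H (S m)). simpl in H. lia. Qed.

Lemma wlast_spec f : is_glb (fun p => f p = f Om) (wlast f).
Proof. unfold wlast. exact (epsilon_spec _ _ (glb_exists _)). Qed.
Lemma last_Om_iff f : wlast f = Om <-> forall n, f (Fin n) <> f Om.
Proof.
  destruct (wlast_spec f) as [H1 H2]. split.
  - intros E n Hn. specialize (H1 _ Hn). rewrite E in H1. simpl in H1. exact H1.
  - intros H. apply wle_Om_inv. apply H2. intros q Hq.
    destruct q; [exfalso; eapply H; eauto | apply wle_refl].
Qed.

Lemma warp_mono f p q : is_warp f -> wle p q -> wle (f p) (f q).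
Proof. intros [H _]; auto. Qed.
Lemma warp_0 f : is_warp f -> f (Fin 0) = Fin 0.
Proof. intros [_ [H _]]; auto. Qed.
Lemma warp_lub f : is_warp f -> is_lub (fun y => exists n, y = f (Fin n)) (f Om).
Proof. intros [_ [_ H]]; auto. Qed.

Lemma warp_Om_of_last f : is_warp f -> wlast f = Om -> f Om = Om.
Proof.
  intros Hf HL. rewrite last_Om_iff in HL.
  apply top_of_all. intro m. apply NNPP; intro H.
  apply not_wle in H.
  destruct (f Om) as [k|] eqn:E; [|simpl in H; contradiction].
  destruct k. { apply (HL 0). rewrite (warp_0 f Hf); try rewrite E; auto. }
  destruct (lub_approx _ _ (Fin k) (warp_lub f Hf)) as [x [[j ->] Hx]].
  { rewrite E. split; simpl; [lia| intro HH; injection HH; lia]. }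
  apply (HL j). try rewrite E.
  pose proof (warp_mono f (Fin j) Om Hf (wle_Om _)) as H'. rewrite E in H'.
  destruct (f (Fin j)); simpl in *; try contradiction. f_equal; lia.
Qed.

Lemma last_fin f : is_warp f -> wlast f = Om -> forall n, exists l, f (Fin n) = Fin l.
Proof.
  intros Hf HL n. pose proof (warp_Om_of_last f Hf HL) as E.
  rewrite last_Om_iff in HL. specialize (HL n). rewrite E in HL.
  destruct (f (Fin n)); eauto. congruence.
Qed.

Lemma last_unbounded f : is_warp f -> wlast f = Om -> forall m, exists n, ~ wle (f (Fin n)) (Fin m).
Proof.
  intros Hf HL m. pose proof (warp_Om_of_last f Hf HL) as E.
  destruct (lub_approx _ _ (Fin m) (warp_lub f Hf)) as [x [[n ->] Hx]].
  { rewrite E; apply Fin_wlt_Om. }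
  eauto.
Qed.

Lemma comp_warp f g : is_warp f -> is_warp g -> is_warp (wcomp f g).
Proof.
  intros Hf Hg. unfold wcomp. split; [|split].
  - intros p q H. apply (warp_mono f); auto. apply (warp_mono g); auto.
  - rewrite (warp_0 g Hg). apply warp_0; auto.
  - split.
    + intros y [n ->]. apply (warp_mono f); auto. apply (warp_mono g); auto. apply wle_Om.
    + intros r Hr.
      assert (Hgen: forall n, wle (f (g (Fin n))) r) by (intros; apply Hr; eauto).
      destruct (g Om) as [m|] eqn:E.
      * destruct m. { rewrite (warp_0 f Hf). apply wle_0. }
        destruct (lub_approx _ _ (Fin m) (warp_lub g Hg)) as [x [[k ->] Hx]].
        { rewrite E; split; simpl; [lia|intro HH; injection HH; lia]. }
        assert (H: g (Fin k) = Fin (S m)).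
        { pose proof (warp_mono g _ _ Hg (wle_Om (Fin k))) as H. rewrite E in H.
          destruct (g (Fin k)); simpl in *; try contradiction. f_equal; lia. }
        rewrite <- H. apply Hgen.
      * destruct (warp_lub f Hf) as [_ H2]. apply H2. intros y [k ->].
        destruct (lub_approx _ _ (Fin k) (warp_lub g Hg)) as [x [[n ->] Hx]].
        { rewrite E. apply Fin_wlt_Om. }
        eapply wle_trans; [|apply (Hgen n)]. apply (warp_mono f); auto. apply not_wle; auto.
Qed.

Lemma last_comp f g : is_warp f -> is_warp g -> wlast f = Om -> wlast g = Om ->
  wlast (wcomp f g) = Om.
Proof.
  intros Hf Hg Lf Lg. apply last_Om_iff. intro n. unfold wcomp.
  rewrite (warp_Om_of_last g Hg Lg). destruct (last_fin g Hg Lg n) as [k ->].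
  apply last_Om_iff; auto.
Qed.

Lemma wid_warp : is_warp wid.
Proof.
  unfold wid; split; [|split]; auto. split.
  - intros; apply wle_Om.
  - intros r Hr. rewrite (top_of_all r); [apply wle_refl|]. intro m; apply Hr; eauto.
Qed.
Lemma wbot_warp : is_warp wbot.
Proof.
  unfold wbot; split; [|split]; auto. intros; apply wle_refl. split.
  - intros y [n ->]; apply wle_refl.
  - intros r Hr; apply Hr. exists 0; auto.
Qed.

Lemma resid_unique (C : (wb -> wb) -> Prop) r g :
  is_warp r -> is_warp g ->
  (forall h, is_warp h -> (fle h r <-> C h)) ->
  (forall h, is_warp h -> (fle h g <-> C h)) -> forall p, r p = g p.
Proof.
  intros Hr Hg H1 H2 p. apply wle_antisym.
  - apply (proj2 (H2 r Hr)). apply (proj1 (H1 r Hr)). intro; apply wle_refl.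
  - apply (proj2 (H1 g Hg)), (proj1 (H2 g Hg)). intro; apply wle_refl.
Qed.

Lemma wtop_cases x : (x = Fin 0 /\ wtop x = Fin 0) \/ (x <> Fin 0 /\ wtop x = Om).
Proof. destruct x as [[|n]|]; simpl; auto; right; split; auto; discriminate. Qed.

Definition go (f : wb -> wb) (p : wb) : wb :=
  match p with
  | Fin n => if excluded_middle_informative (f (Fin n) = Om) then Om else Fin 0
  | Om => if excluded_middle_informative (exists n, f (Fin n) = Om) then Om else Fin 0
  end.

Lemma go_warp f : is_warp f -> is_warp (go f).
Proof.
  intros Hf. split; [|split].
  - intros p q H. destruct p as [n|], q as [m|]; simpl in *;
      repeat destruct excluded_middle_informative; simpl; auto; try contradiction.
    + apply n0. apply wle_Om_inv. rewrite <- e. apply (warp_mono f); auto.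
    + apply n0. eauto.
  - simpl. destruct excluded_middle_informative; auto. rewrite (warp_0 f Hf) in e. discriminate.
  - split.
    + intros y [n ->]. simpl. repeat destruct excluded_middle_informative; simpl; auto.
      exfalso; eauto.
    + intros r Hr. simpl. destruct excluded_middle_informative as [[n e]|ne].
      * specialize (Hr (go f (Fin n)) (ex_intro _ n eq_refl)). simpl in Hr.
        destruct excluded_middle_informative; [auto|contradiction].
      * apply wle_0.
Qed.

Lemma go_aux f h p : is_warp h -> f p <> Om -> fle (wcomp wtop h) f -> h p = Fin 0.
Proof.
  intros Hh Hp H. specialize (H p). unfold wcomp in H.
  destruct (wtop_cases (h p)) as [[E _]|[_ E]]; auto. rewrite E in H.
  apply wle_Om_inv in H. contradiction.
Qed.

Lemma go_univ f : is_warp f ->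
  forall g, is_warp g -> (fle g (go f) <-> fle (wcomp wtop g) f).
Proof.
  intros Hf h Hh. split.
  - intros H p. specialize (H p). unfold wcomp.
    destruct (wtop_cases (h p)) as [[_ E]|[Ne E]]; rewrite E; [apply wle_0|].
    destruct p as [n|]; simpl in H; destruct excluded_middle_informative as [e|ne].
    + rewrite e; apply wle_refl.
    + destruct (h (Fin n)) as [[|k]|]; simpl in H; try lia; try contradiction.
    + destruct e as [n e]. apply wle_trans with (f (Fin n)); [rewrite e; apply wle_refl|]. apply (warp_mono f); auto. apply wle_Om.
    + destruct (h Om) as [[|k]|]; simpl in H; try lia; try contradiction.
  - intros H p. destruct p as [n|]; simpl; destruct excluded_middle_informative as [e|ne];
      try apply wle_Om.
    + rewrite (go_aux f h (Fin n)); auto. apply wle_refl.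
    + apply (warp_lub h Hh). intros y [n ->]. rewrite (go_aux f h (Fin n)); auto.
      apply wle_refl. intro; apply ne; eauto.
Qed.

Definition grf (f : wb -> wb) (n : nat) : wb :=
  match n with 0 => Fin 0 | S _ => wsup (fun q => wle (f q) (Fin n)) end.
Definition gr (f : wb -> wb) (p : wb) : wb :=
  match p with Fin n => grf f n | Om => wsup (fun y => exists n, y = grf f n) end.

Lemma f_wsup_le f P : is_warp f -> wle (f (wsup (fun q => wle (f q) P))) P.
Proof.
  intros Hf. set (A := fun q => wle (f q) P).
  destruct (classic (A (wsup A))) as [H|H]; auto. exfalso.
  destruct (wsup A) as [[|m]|] eqn:E.
  - apply H. unfold A. rewrite (warp_0 f Hf). apply wle_0.
  - destruct (lub_approx A _ (Fin m) (wsup_spec A)) as [x [Ax Hx]].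
    { rewrite E; split; simpl; [lia| intro HH; injection HH; lia]. }
    assert (x = Fin (S m)).
    { pose proof (wsup_ub A x Ax) as H1. rewrite E in H1.
      apply wle_antisym; auto. apply not_wle_Fin; auto. }
    subst. apply H; auto.
  - apply H. unfold A. apply (warp_lub f Hf). intros y [k ->].
    destruct (lub_approx A _ (Fin k) (wsup_spec A)) as [x [Ax Hx]].
    { rewrite E; apply Fin_wlt_Om. }
    eapply wle_trans; [|exact Ax]. apply (warp_mono f); auto. apply not_wle; auto.
Qed.

Lemma grf_fle f n : is_warp f -> wle (f (grf f n)) (Fin n).
Proof.
  intros Hf. destruct n; simpl. rewrite (warp_0 f Hf); apply wle_refl.
  apply f_wsup_le; auto.
Qed.

Lemma grf_mono f n m : n <= m -> wle (grf f n) (grf f m).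
Proof.
  intros H. destruct n; [apply wle_0|]. destruct m; [lia|]. simpl.
  apply wsup_least. intros q Hq. apply wsup_ub. eapply wle_trans; [exact Hq|]. simpl; lia.
Qed.

Lemma gr_warp f : is_warp f -> is_warp (gr f).
Proof.
  intros Hf. split; [|split].
  - intros p q H. destruct p as [n|], q as [m|]; simpl in *; try contradiction.
    + apply grf_mono; auto.
    + apply wsup_ub; eauto.
    + apply wle_refl.
  - reflexivity.
  - exact (wsup_spec _).
Qed.

Lemma gr_univ f : is_warp f ->
  forall g, is_warp g -> (fle g (gr f) <-> fle (wcomp f g) wid).
Proof.
  intros Hf h Hh. split.
  - intros H p. unfold wcomp, wid. destruct p as [n|]; [|apply wle_Om].
    apply wle_trans with (f (grf f n)); [apply (warp_mono f); [exact Hf| apply (H (Fin n))]|].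
    apply grf_fle; auto.
  - intros H.
    assert (HF : forall n, wle (h (Fin n)) (grf f n)).
    { intros [|n]; simpl. rewrite (warp_0 h Hh); apply wle_refl.
      apply wsup_ub. apply (H (Fin (S n))). }
    intros [n|]; [apply HF|]. simpl. apply (warp_lub h Hh). intros y [n ->].
    eapply wle_trans; [apply HF|]. apply wsup_ub; eauto.
Qed.

Definition glf (f : wb -> wb) (n : nat) : wb := winf (fun q => wle (Fin n) (f q)).
Definition gl (f : wb -> wb) (p : wb) : wb :=
  match p with Fin n => glf f n | Om => wsup (fun y => exists n, y = glf f n) end.

Lemma glf_mono f n m : n <= m -> wle (glf f n) (glf f m).
Proof.
  intros H. apply winf_greatest. intros q Hq. apply winf_lb.
  eapply wle_trans; [|exact Hq]. simpl; lia.
Qed.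

Lemma gl_warp f : is_warp f -> is_warp (gl f).
Proof.
  intros Hf. split; [|split].
  - intros p q H. destruct p as [n|], q as [m|]; simpl in *; try contradiction.
    + apply glf_mono; auto.
    + apply wsup_ub; eauto.
    + apply wle_refl.
  - simpl. apply wle_antisym; [|apply wle_0]. apply winf_lb. apply wle_0.
  - exact (wsup_spec _).
Qed.

Lemma gl_univ f : is_warp f ->
  forall g, is_warp g -> (fle g (gl f) <-> fle (wcomp g f) wid).
Proof.
  intros Hf h Hh. split.
  - intros H q. unfold wcomp, wid. pose proof (H (f q)) as Hq.
    destruct (f q) as [n|] eqn:E; simpl in Hq.
    + eapply wle_trans; [exact Hq|]. apply winf_lb. rewrite E; apply wle_refl.
    + eapply wle_trans; [exact Hq|]. apply wsup_least. intros y [n ->].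
      apply winf_lb. rewrite E; apply wle_Om.
  - intros H.
    assert (HF : forall n, wle (h (Fin n)) (glf f n)).
    { intros n. apply winf_greatest. intros q Hq.
      eapply wle_trans; [apply (warp_mono h _ _ Hh Hq)|]. apply H. }
    intros [n|]; [apply HF|]. simpl. apply (warp_lub h Hh). intros y [n ->].
    eapply wle_trans; [apply HF|]. apply wsup_ub; eauto.
Qed.

Lemma wo_eq f : is_warp f -> is_warp (wo f) /\ forall p, wo f p = go f p.
Proof.
  intros Hf. unfold wo, ldiv.
  match goal with |- context [epsilon ?i ?P] =>
    destruct (epsilon_spec i P (ex_intro _ (go f) (conj (go_warp f Hf) (go_univ f Hf)))) as [Hw Hu] end.
  split; auto. apply (resid_unique _ _ _ Hw (go_warp f Hf) Hu (go_univ f Hf)).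
Qed.
Lemma wr_eq f : is_warp f -> is_warp (wr f) /\ forall p, wr f p = gr f p.
Proof.
  intros Hf. unfold wr, ldiv.
  match goal with |- context [epsilon ?i ?P] =>
    destruct (epsilon_spec i P (ex_intro _ (gr f) (conj (gr_warp f Hf) (gr_univ f Hf)))) as [Hw Hu] end.
  split; auto. apply (resid_unique _ _ _ Hw (gr_warp f Hf) Hu (gr_univ f Hf)).
Qed.
Lemma wl_eq f : is_warp f -> is_warp (wl f) /\ forall p, wl f p = gl f p.
Proof.
  intros Hf. unfold wl, rdiv.
  match goal with |- context [epsilon ?i ?P] =>
    destruct (epsilon_spec i P (ex_intro _ (gl f) (conj (gl_warp f Hf) (gl_univ f Hf)))) as [Hw Hu] end.
  split; auto. apply (resid_unique _ _ _ Hw (gl_warp f Hf) Hu (gl_univ f Hf)).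
Qed.

Lemma gr_val f k q : is_warp f -> wle (f q) (Fin (S k)) ->
  (q = Om \/ exists m, q = Fin m /\ wlt (Fin (S k)) (f (Fin (S m)))) -> gr f (Fin (S k)) = q.
Proof.
  intros Hf Hq H. simpl. eapply lub_unique; [apply wsup_spec|]. split.
  - intros r Hr. destruct H as [->|[m [-> Hm]]]; [apply wle_Om|].
    destruct (classic (wle r (Fin m))) as [H|H]; auto. exfalso.
    apply not_wle_Fin in H. apply (wlt_not_wle _ _ Hm).
    eapply wle_trans; [apply (warp_mono f _ _ Hf H)|exact Hr].
  - intros r Hr; apply Hr; exact Hq.
Qed.

Lemma le_of_f_big f x n j : is_warp f -> f (Fin (S j)) = Om -> wle (f x) (Fin n) -> wle x (Fin j).
Proof.
  intros Hf Hj Hx. destruct (classic (wle x (Fin j))) as [H|H]; auto. exfalso.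
  apply not_wle_Fin in H. pose proof (warp_mono f _ _ Hf H) as H2. rewrite Hj in H2.
  pose proof (wle_trans _ _ _ H2 Hx). simpl in *. auto.
Qed.

Lemma gr_Om_last f : is_warp f -> wlast f = Om -> gr f Om = Om.
Proof.
  intros Hf HL. apply top_of_all. intro m.
  destruct (last_fin f Hf HL m) as [l Hl].
  apply wle_trans with (grf f (S l)).
  - unfold grf. apply wsup_ub. rewrite Hl. simpl; lia.
  - change (gr f Om) with (wsup (fun y => exists n, y = grf f n)). apply wsup_ub. eauto.
Qed.

Lemma gr_fin_last f n : is_warp f -> wlast f = Om -> gr f (Fin n) <> Om.
Proof.
  intros Hf HL E. pose proof (grf_fle f n Hf) as H. simpl in E. rewrite E in H.
  rewrite (warp_Om_of_last f Hf HL) in H. simpl in H. auto.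
Qed.

Lemma gl_val f n m : is_warp f -> wle (Fin n) (f (Fin (S m))) -> wlt (f (Fin m)) (Fin n) ->
  gl f (Fin n) = Fin (S m).
Proof.
  intros Hf H1 H2. simpl. unfold glf. eapply glb_unique; [apply winf_spec|]. split.
  - intros q Hq. destruct (classic (wle q (Fin m))) as [H|H]; [|apply not_wle_Fin; auto].
    exfalso. apply (wlt_not_wle _ _ H2). eapply wle_trans; [exact Hq|].
    apply (warp_mono f); auto.
  - intros r Hr; apply Hr; exact H1.
Qed.

Lemma gl_empty f n : is_warp f -> wlt (f Om) (Fin n) -> gl f (Fin n) = Om.
Proof.
  intros Hf H. simpl. unfold glf. eapply glb_unique; [apply winf_spec|]. split.
  - intros q Hq. exfalso. apply (wlt_not_wle _ _ H). eapply wle_trans; [exact Hq|].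
    apply (warp_mono f); auto. apply wle_Om.
  - intros; apply wle_Om.
Qed.

Lemma gl_Om_last f : is_warp f -> wlast f = Om -> gl f Om = Om.
Proof.
  intros Hf HL. apply top_of_all. intro m.
  destruct (last_fin f Hf HL m) as [l Hl].
  apply wle_trans with (glf f (S l)).
  - apply winf_greatest. intros q Hq.
    destruct (classic (wle q (Fin m))) as [H|H]; [|apply not_wle; auto].
    exfalso. pose proof (warp_mono f _ _ Hf H) as H2. rewrite Hl in H2.
    pose proof (wle_trans _ _ _ Hq H2). simpl in *; lia.
  - change (gl f Om) with (wsup (fun y => exists n, y = glf f n)). apply wsup_ub. eauto.
Qed.

Lemma gl_fin_last f n : is_warp f -> wlast f = Om -> gl f (Fin n) <> Om.
Proof.
  intros Hf HL E. destruct (last_unbounded f Hf HL n) as [k Hk].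
  assert (H : wle (gl f (Fin n)) (Fin k)).
  { change (gl f (Fin n)) with (glf f n). apply winf_lb. apply not_wle; auto. }
  rewrite E in H. simpl in H. auto.
Qed.

Lemma denote_warp theta : (forall x, is_warp (theta x)) -> forall t, is_warp (denote theta t).
Proof.
  intros Hw t. induction t; simpl.
  - auto.
  - apply comp_warp; auto.
  - apply (proj1 (wo_eq _ IHt)).
  - apply (proj1 (wl_eq _ IHt)).
  - apply (proj1 (wr_eq _ IHt)).
  - apply wid_warp.
  - apply wbot_warp.
Qed.

Lemma main_P D (Hsat : saturated D) theta d (Hw : forall x, is_warp (theta x))
  (Hd : is_diagram D d)
  (Hx : forall x, strongly_extends D d (TVar x) (theta x)) : forall t,
  (forall a, D (SApp t a) -> denote theta t (d a) = d (SApp t a)) /\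
  (forall a, D (SApp t a) -> d (SLast t) = Om -> wlast (denote theta t) = Om).
Proof.
  destruct Hd as (S1 & S2 & S3 & S4 & S5 & S6 & L1 & L2 & L3 & L4 & O1 & O2 & O3 & O4
    & R1 & R2 & R3 & R4 & A1 & A2 & A3 & A4 & A5).
  intro t. induction t.
  -
    destruct (Hx x) as [Ex Sx]. simpl. split.
    + intros a Ha; apply Ex; exists a; auto.
    + intros a Ha HL. destruct Sx as [N|[_ H]]; auto.
      exfalso. apply (N (d a) (d (SApp (TVar x) a))). exists a; auto.
  -
    destruct IHt1 as [E1 M1], IHt2 as [E2 M2]. cbn [denote]. split.
    + intros a Ha. unfold wcomp.
      pose proof (Hsat _ _ Ha (lt_comp _ _ _)) as D12.
      pose proof (Hsat _ _ D12 (lt_app _ _)) as D2.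
      rewrite E2, E1 by auto. symmetry; apply L3; auto.
    + intros a Ha HL.
      pose proof (Hsat _ _ Ha (lt_comp _ _ _)) as D12.
      pose proof (Hsat _ _ D12 (lt_app _ _)) as D2.
      pose proof (Hsat _ _ Ha (lt_last _ _)) as HlL.
      pose proof (Hsat _ _ HlL (lt_app _ _)) as DlL.
      pose proof (Hsat _ _ (Hsat _ _ D12 (lt_last _ _)) (lt_app _ _)) as DL1.
      pose proof (Hsat _ _ (Hsat _ _ D2 (lt_last _ _)) (lt_app _ _)) as DL2.
      destruct (L4 t1 t2 HlL DlL DL1 DL2 HL) as [H1 H2].
      apply last_comp; try apply denote_warp; auto.
      apply (M1 _ D12 H1). apply (M2 _ D2 H2).
  -
    destruct IHt as [Et Lt]. cbn [denote].
    pose proof (denote_warp theta Hw t) as Hfw.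
    set (f := denote theta t) in *.
    destruct (wo_eq f Hfw) as [Hgw Hg].
    assert (Fc : forall b n, D (SApp (TO t) b) -> d b = Fin n -> wo f (Fin n) = d (SApp (TO t) b)).
    { intros b n Hb Hn.
      pose proof (Hsat _ _ Hb (lt_app _ _)) as Db.
      pose proof (Hsat _ _ Hb (lt_o _ _)) as Dt.
      destruct n as [|k].
      - rewrite (warp_0 _ Hgw). symmetry. apply S2; auto.
      - rewrite Hg. simpl. destruct excluded_middle_informative as [e|ne].
        + symmetry. apply (O2 t b); auto. rewrite Hn; apply Fin_wlt_Om.
          rewrite <- Et by auto. rewrite Hn; exact e.
        + destruct (O1 t b Hb) as [E|E]; [rewrite E; auto|]. exfalso. apply ne.
          apply (O2 t b) in E; auto. rewrite <- Et in E by auto. rewrite Hn in E; exact E.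
          rewrite Hn; apply Fin_wlt_Om. }
    split.
    + intros a Ha. destruct (d a) as [n|] eqn:Ea; [now apply Fc|].
      pose proof (Hsat _ _ Ha (lt_last _ _)) as Hb.
      pose proof (Hsat _ _ Hb (lt_app _ _)) as Db.
      pose proof (Hsat _ _ Ha (lt_app _ _)) as Da.
      pose proof (Hsat _ _ Ha (lt_o _ _)) as Dt.
      assert (E1 : d (SApp (TO t) a) = d (SApp (TO t) (SLast (TO t)))).
      { apply (S5 (TO t) a); auto. rewrite Ea. apply wle_Om. }
      rewrite E1.
      destruct (wlt_Om _ (O3 t Db)) as [m Em].
      pose proof (Fc _ m Hb Em) as Fm.
      rewrite <- Fm. rewrite !Hg. simpl.
      destruct (excluded_middle_informative (exists n, f (Fin n) = Om)) as [[n e]|ne];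
      destruct (excluded_middle_informative (f (Fin m) = Om)) as [e2|ne2]; auto.
      * exfalso.
        assert (Z : d (SApp (TO t) (SLast (TO t))) = Fin 0).
        { rewrite <- Fm, Hg. simpl. destruct excluded_middle_informative; [contradiction|reflexivity]. }
        assert (NL : wlast f <> Om).
        { rewrite last_Om_iff. intro H. apply (H n). rewrite e. symmetry. apply wle_Om_inv.
          apply wle_trans with (f (Fin n)); [rewrite e; apply wle_refl|].
          apply (warp_mono f); auto. apply wle_Om. }
        pose proof (Hsat _ _ Dt (lt_last _ _)) as DtL.
        pose proof (Hsat _ _ DtL (lt_app _ _)) as DL.
        destruct (d (SLast t)) as [l|] eqn:EL; [|apply NL; apply (Lt a); auto].
        assert (H4 : wlt (d (SApp t (SLast t))) Om).
        { apply O4; auto. rewrite Z; apply Fin_wlt_Om. rewrite EL; apply Fin_wlt_Om. }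
        assert (H5 : d (SApp t a) = d (SApp t (SLast t))).
        { apply (S5 t a); auto. rewrite EL, Ea; apply wle_Om. }
        rewrite <- H5, <- Et, Ea in H4 by auto.
        assert (FO : f Om = Om).
        { apply wle_Om_inv. apply wle_trans with (f (Fin n)); [rewrite e; apply wle_refl|].
          apply (warp_mono f); auto. apply wle_Om. }
        rewrite FO in H4.
        destruct H4; contradiction.
      * exfalso; eauto.
    + intros a Ha HL. exfalso.
      pose proof (Hsat _ _ (Hsat _ _ Ha (lt_last _ _)) (lt_app _ _)) as Db.
      pose proof (O3 t Db) as H. rewrite HL in H. destruct H; contradiction.
  -
    destruct IHt as [Et Lt]. cbn [denote].
    pose proof (denote_warp theta Hw t) as Hfw.
    set (f := denote theta t) in *.
    destruct (wl_eq f Hfw) as [Hgw Hg].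
    assert (Fc : forall b n, D (SApp (TL t) b) -> d b = Fin n -> wl f (Fin n) = d (SApp (TL t) b)).
    { intros b n Hb Hn.
      pose proof (Hsat _ _ Hb (lt_app _ _)) as Db.
      pose proof (Hsat _ _ Hb (lt_l1 _ _)) as D1.
      pose proof (Hsat _ _ Hb (lt_l2 _ _)) as D2.
      pose proof (Hsat _ _ D2 (lt_app _ _)) as D3.
      destruct n as [|k].
      - rewrite (warp_0 _ Hgw). symmetry. apply S2; auto.
      - rewrite Hg.
        destruct (d (SApp (TL t) b)) as [m|] eqn:Eq.
        + assert (H1 : wle (d b) (d (SApp t (SApp (TL t) b)))).
          { apply A1; auto. rewrite Eq; apply Fin_wlt_Om. }
          rewrite <- Et, Eq, Hn in H1 by auto.
          destruct m as [|m'].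
          * rewrite (warp_0 f Hfw) in H1. simpl in H1. lia.
          * assert (H2 : wlt (d (SApp t (SP (SApp (TL t) b)))) (d b)).
            { apply A2; auto. rewrite Hn; split; simpl; [lia|intro HH; injection HH; lia].
              rewrite Hn; apply Fin_wlt_Om. rewrite Eq; apply Fin_wlt_Om. }
            rewrite <- Et, S3, Eq, Hn in H2 by auto. simpl in H2.
            apply gl_val; auto.
        + assert (H3 : wlt (d (SApp t (SApp (TL t) b))) (d b)).
          { apply A3; auto. rewrite Hn; apply Fin_wlt_Om. }
          rewrite <- Et, Eq, Hn in H3 by auto.
          apply gl_empty; auto. }
    split.
    + intros a Ha. destruct (d a) as [n|] eqn:Ea; [now apply Fc|].
      pose proof (Hsat _ _ Ha (lt_last _ _)) as Hb.
      pose proof (Hsat _ _ Hb (lt_app _ _)) as Db.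
      pose proof (Hsat _ _ Ha (lt_app _ _)) as Da.
      assert (E1 : d (SApp (TL t) a) = d (SApp (TL t) (SLast (TL t)))).
      { apply (S5 (TL t) a); auto. rewrite Ea. apply wle_Om. }
      rewrite E1.
      destruct (d (SLast (TL t))) as [m|] eqn:Eb.
      * pose proof (Fc _ m Hb Eb) as Fm. rewrite <- Fm.
        destruct (wl f (Fin m)) as [j|] eqn:Ej.
        -- pose proof (Hsat _ _ Hb (lt_l1 _ _)) as D1.
           assert (H5 : d (SApp t (SApp (TL t) (SLast (TL t)))) = Om).
           { apply A5; auto. rewrite <- Fm. apply Fin_wlt_Om. }
           rewrite <- Et, <- Fm in H5 by auto.
           apply wle_antisym.
           ++ rewrite Hg. change (gl f Om) with (wsup (fun y => exists n, y = glf f n)).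
              apply wsup_least. intros y [n ->]. apply winf_lb. rewrite H5; apply wle_Om.
           ++ rewrite <- Ej. apply (warp_mono _ _ _ Hgw), wle_Om.
        -- apply wle_Om_inv. eapply wle_trans; [rewrite <- Ej; apply wle_refl|]. apply (warp_mono _ _ _ Hgw), wle_Om.
      * rewrite (S6 (TL t)); auto.
        pose proof (Hsat _ _ Ha (lt_l1 _ _)) as D1.
        pose proof (Hsat _ _ (Hsat _ _ D1 (lt_last _ _)) (lt_app _ _)) as DL.
        assert (HL : wlast f = Om) by (apply (Lt _ D1); apply A4; auto).
        rewrite Hg. apply gl_Om_last; auto.
    + intros a Ha HL.
      pose proof (Hsat _ _ Ha (lt_last _ _)) as Hb.
      pose proof (Hsat _ _ Hb (lt_app _ _)) as Db.
      pose proof (Hsat _ _ Ha (lt_l1 _ _)) as D1.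
      pose proof (Hsat _ _ (Hsat _ _ D1 (lt_last _ _)) (lt_app _ _)) as DL.
      assert (HfL : wlast f = Om) by (apply (Lt _ D1); apply A4; auto).
      apply last_Om_iff. intro n. rewrite !Hg, gl_Om_last by auto.
      apply gl_fin_last; auto.
  -
    destruct IHt as [Et Lt]. cbn [denote].
    pose proof (denote_warp theta Hw t) as Hfw.
    set (f := denote theta t) in *.
    destruct (wr_eq f Hfw) as [Hgw Hg].
    assert (Fc : forall b n, D (SApp (TR t) b) -> d b = Fin n -> wr f (Fin n) = d (SApp (TR t) b)).
    { intros b n Hb Hn.
      pose proof (Hsat _ _ Hb (lt_app _ _)) as Db.
      pose proof (Hsat _ _ Hb (lt_r1 _ _)) as D1.
      pose proof (Hsat _ _ Hb (lt_r2 _ _)) as D2.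
      pose proof (Hsat _ _ D2 (lt_app _ _)) as D3.
      destruct n as [|k].
      - rewrite (warp_0 _ Hgw). symmetry. apply S2; auto.
      - rewrite Hg.
        assert (Hfq : wle (f (d (SApp (TR t) b))) (Fin (S k))).
        { rewrite Et by auto. rewrite <- Hn. apply R1; auto. }
        apply gr_val; auto.
        destruct (d (SApp (TR t) b)) as [m|] eqn:Eq; [right|left; auto].
        exists m; split; auto.
        assert (H2 : wlt (d b) (d (SApp t (SS (SApp (TR t) b))))).
        { apply R2; auto. rewrite Hn; split; simpl; [lia|intro HH; injection HH; lia].
          rewrite Hn; apply Fin_wlt_Om. rewrite Eq; apply Fin_wlt_Om. }
        rewrite <- Et, S4, Eq, Hn in H2 by auto. exact H2. }
    split.
    + intros a Ha. destruct (d a) as [n|] eqn:Ea; [now apply Fc|].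
      pose proof (Hsat _ _ Ha (lt_last _ _)) as Hb.
      pose proof (Hsat _ _ Hb (lt_app _ _)) as Db.
      pose proof (Hsat _ _ Ha (lt_app _ _)) as Da.
      assert (E1 : d (SApp (TR t) a) = d (SApp (TR t) (SLast (TR t)))).
      { apply (S5 (TR t) a); auto. rewrite Ea. apply wle_Om. }
      rewrite E1.
      destruct (d (SLast (TR t))) as [m|] eqn:Eb.
      * pose proof (Fc _ m Hb Eb) as Fm. rewrite <- Fm.
        destruct (wr f (Fin m)) as [j|] eqn:Ej.
        -- pose proof (Hsat _ _ Hb (lt_r2 _ _)) as D2.
           pose proof (Hsat _ _ D2 (lt_app _ _)) as D3.
           assert (H4 : d (SApp t (SS (SApp (TR t) (SLast (TR t))))) = Om).
           { apply R4; auto. rewrite <- Fm. apply Fin_wlt_Om. }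
           rewrite <- Et, S4, <- Fm in H4 by auto. simpl in H4.
           apply wle_antisym.
           ++ rewrite Hg. change (gr f Om) with (wsup (fun y => exists n, y = grf f n)).
              apply wsup_least. intros y [n ->].
              apply (le_of_f_big f _ n j Hfw H4). apply grf_fle; auto.
           ++ rewrite <- Ej. apply (warp_mono _ _ _ Hgw), wle_Om.
        -- apply wle_Om_inv. eapply wle_trans; [rewrite <- Ej; apply wle_refl|]. apply (warp_mono _ _ _ Hgw), wle_Om.
      * rewrite (S6 (TR t)); auto.
        pose proof (Hsat _ _ Ha (lt_r1 _ _)) as D1.
        pose proof (Hsat _ _ (Hsat _ _ D1 (lt_last _ _)) (lt_app _ _)) as DL.
        assert (HL : wlast f = Om) by (apply (Lt _ D1); apply R3; auto).
        rewrite Hg. apply gr_Om_last; auto.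
    + intros a Ha HL.
      pose proof (Hsat _ _ Ha (lt_last _ _)) as Hb.
      pose proof (Hsat _ _ Hb (lt_app _ _)) as Db.
      pose proof (Hsat _ _ Ha (lt_r1 _ _)) as D1.
      pose proof (Hsat _ _ (Hsat _ _ D1 (lt_last _ _)) (lt_app _ _)) as DL.
      assert (HfL : wlast f = Om) by (apply (Lt _ D1); apply R3; auto).
      apply last_Om_iff. intro n. rewrite !Hg, gr_Om_last by auto.
      apply gr_fin_last; auto.
  -
    cbn [denote]. split.
    + intros a Ha. unfold wid. symmetry; apply L1; auto. apply (Hsat _ _ Ha (lt_app _ _)).
    + intros a Ha HL. apply last_Om_iff. intros n; unfold wid; discriminate.
  -
    cbn [denote]. split.
    + intros a Ha. unfold wbot.
      pose proof (Hsat _ _ Ha (lt_last _ _)) as DbL.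
      pose proof (Hsat _ _ DbL (lt_app _ _)) as DL.
      pose proof (Hsat _ _ Ha (lt_app _ _)) as Da.
      pose proof (L2 a Ha DL) as HL0.
      rewrite (proj1 (S5 TBot a Da Ha DL DbL)) by (rewrite HL0; apply wle_0).
      symmetry. apply S2; auto.
    + intros a Ha HL.
      pose proof (Hsat _ _ (Hsat _ _ Ha (lt_last _ _)) (lt_app _ _)) as DL.
      rewrite (L2 a Ha DL) in HL. discriminate.
Qed.

Theorem lemma3p17 :
  forall (D : sample -> Prop), saturated D ->
  forall (t : term) (theta : nat -> wb -> wb) (d : sample -> wb),
    (forall x, is_warp (theta x)) ->
    is_diagram D d ->
    (forall x, strongly_extends D d (TVar x) (theta x)) ->
    strongly_extends D d t (denote theta t).
Proof.
  intros D Hsat t theta d Hw Hd Hx.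
  destruct (main_P D Hsat theta d Hw Hd Hx t) as [E L].
  split.
  - intros i j [a [Ha [-> ->]]]. auto.
  - destruct (classic (exists i j, delta_t D d t i j)) as [[i [j [a [Ha _]]]]|N].
    + right. split.
      * exists (d a), (d (SApp t a)), a. auto.
      * intro; eapply L; eauto.
    + left. intros i j H. apply N; eauto.
Qed.
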